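(* Let $d\ge46$. The number of finite strictly increasing sequences of positive integers $h_1<\dots<h_k$ ($k\ge1$) satisfying $h_1\ge7$, $h_k=d+k+1$ and $h_{i+1}-h_i\ge6$ for all $i$ (equivalently, the number of $d$-dimensional lattices $L_d(h_1,\dots,h_k)$ satisfying these conditions) equals $\alpha(d-8)$.
   Context: For a strictly increasing sequence of positive integers $h_1<h_2<\dots$ and $d\ge1$, $L_d(h_1,h_2,\dots)=\{x\in\mathbb Z^{d+2}:\sum_ix_i=0,\ \sum_is_ix_i=0\}$ where $s_1<\dots<s_{d+2}$ are the $d+2$ smallest elements of $\{1,2,\dots\}\setminus\{h_1,h_2,\dots\}$. For $n\ge1$, $\alpha(n)$ is the number of strictly increasing integer sequences $s_1=1<s_2<\dots<s_n$ with $s_{i+1}-s_i\in\{1,2\}$ for all $i$ and such that whenever $1\le i<j\le n-1$ with $s_{i+1}-s_i=s_{j+1}-s_j=2$ one has $s_j-s_i\ge6$; it satisfies $\alpha(n)=n$ for $n\le6$ and $\alpha(n)=\alpha(n-1)+\alpha(n-5)$ for $n\ge6$. *)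

(* Defs.v *)
From mathcomp Require Import all_boot.
Set Implicit Arguments. Unset Strict Implicit. Unset Printing Implicit Defensive.

(* h is the list [:: h_1; ...; h_k]; indices are 0-based in Rocq. *)
Definition valid_h (d : nat) (h : seq nat) : Prop :=
  [/\ 1 <= size h,
      (forall i, i.+1 < size h -> nth 0 h i < nth 0 h i.+1),
      7 <= nth 0 h 0,
      nth 0 h (size h).-1 = d + size h + 1
    & (forall i, i.+1 < size h -> 6 <= nth 0 h i.+1 - nth 0 h i)].

(* "the number of objects satisfying P is c": some duplicate-free list
   enumerates exactly the objects satisfying P, and has length c. *)
Definition num_of (T : eqType) (P : T -> Prop) (c : nat) : Prop :=
  exists l : seq T, [/\ uniq l, (forall x, x \in l <-> P x) & size l = c].

Fixpoint steps12 (m x : nat) : seq (seq nat) :=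
  match m with
  | 0 => [:: [::]]
  | m'.+1 => match m' with
             | 0 => [:: [:: x]]
             | _ => map (cons x) (steps12 m' x.+1 ++ steps12 m' x.+2)
             end
  end.

(* s = [:: s_1; ...; s_n]: s_1 = 1, s_{i+1}-s_i in {1,2}, and whenever
   1 <= i < j <= n-1 with s_{i+1}-s_i = s_{j+1}-s_j = 2, s_j - s_i >= 6. *)
Definition alpha_ok (n : nat) (s : seq nat) : bool :=
  [&& size s == n,
      nth 0 s 0 == 1,
      all (fun i => (nth 0 s i.+1 == (nth 0 s i).+1) ||
                    (nth 0 s i.+1 == (nth 0 s i).+2)) (iota 0 n.-1)
    & all (fun i => all (fun j =>
          (i < j) ==> (nth 0 s i.+1 - nth 0 s i == 2) ==>
          (nth 0 s j.+1 - nth 0 s j == 2) ==> (6 <= nth 0 s j - nth 0 s i))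
          (iota 0 n.-1)) (iota 0 n.-1)].

(* steps12 n 1 lists every candidate (each exactly once); alpha counts the
   admissible ones. *)
Definition alpha (n : nat) : nat := count (alpha_ok n) (steps12 n 1).

(* sanity check: alpha(n) = n for n <= 6, then alpha(n) = alpha(n-1) + alpha(n-5) *)
Example alpha_check : map alpha (iota 1 14) =
  [:: 1; 2; 3; 4; 5; 6; 8; 11; 15; 20; 26; 34; 45; 60].
Proof. by vm_compute. Qed.

(* Main.v *)
Require Import Defs.
From mathcomp Require Import all_boot zify.
Set Implicit Arguments. Unset Strict Implicit. Unset Printing Implicit Defensive.

Definition two (s : seq nat) i := nth 0 s i.+1 = nth 0 s i + 2.
Definition stepok (s : seq nat) :=
  forall i, i.+1 < size s -> nth 0 s i.+1 = nth 0 s i + 1 \/ two s i.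
Definition Dp (s : seq nat) :=
  forall i j, i < j -> j.+1 < size s -> two s i -> two s j -> 5 <= j - i.
Definition Ec (c : nat) (s : seq nat) :=
  forall j, j.+1 < size s -> two s j -> c <= j.
Definition Pp (s : seq nat) :=
  forall i j, i < j -> j.+1 < size s -> two s i -> two s j ->
    6 <= nth 0 s j - nth 0 s i.

Fixpoint okr (c : nat) (s : seq nat) : bool :=
  match s with
  | x :: ((y :: _) as t) =>
      if y == x.+1 then okr c.-1 t else (c == 0) && (y == x.+2) && okr 4 t
  | _ => true
  end.

Lemma stepok_tail x t : stepok (x :: t) -> stepok t.
Proof. by move=> H i Hi; apply: (H i.+1). Qed.

Lemma okr_char s c : stepok s -> (okr c s <-> Ec c s /\ Dp s).
Proof.
elim: s c => [|x t IH] c Hs.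
  by split=> // _; split=> [j|i j]. 
case: t IH Hs => [|y t] IH Hs.
  by split=> // _; split=> [j|i j] /=; rewrite ?ltnS ?ltn0.
have Ht := stepok_tail Hs.
have [E1|E2] := Hs 0 isT.
- rewrite /= in E1.
  have -> : okr c [:: x, y & t] = okr c.-1 (y::t).
    by rewrite [LHS]/= E1 addn1 eqxx.
  rewrite (IH c.-1 Ht); split=> [[HE HD]|[HE HD]]; split.
  + case=> [|j] Hj Htw; first by rewrite /two /= E1 in Htw; lia.
    by have := HE j Hj Htw; lia.
  + case=> [|i] [|j] // Hij Hj Hi Htw; first by rewrite /two /= E1 in Hi; lia.
    by have := HD i j Hij Hj Hi Htw.
  + move=> j Hj Htw; have := HE j.+1 Hj Htw; lia.
  + move=> i j Hij Hj Hi Htw; have := HD i.+1 j.+1 Hij Hj Hi Htw; lia.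
- rewrite /two /= in E2.
  have -> : okr c [:: x, y & t] = (c == 0) && okr 4 (y::t).
    rewrite [LHS]/= E2 (_ : (x + 2 == x.+1) = false); last by apply/eqP; lia.
    by rewrite (_ : x + 2 = x.+2) ?eqxx ?andbT //; lia.
  split.
  + move/andP=> [/eqP -> /(IH 4 Ht) [HE HD]]; split; first by move=> j.
    case=> [|i] [|j] // Hij Hj Hi Htw.
      by have := HE j Hj Htw; lia.
    by have := HD i j Hij Hj Hi Htw.
  + move=> [HE HD]; apply/andP; split.
      by have := HE 0 isT; rewrite /two /= E2 => /(_ erefl); case: c {HE}.
    apply/(IH 4 Ht); split.
      have H0 : two [:: x, y & t] 0 by rewrite /two /= E2.
      move=> j Hj Htw; have := HD 0 j.+1 isT Hj H0 Htw; lia.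
    move=> i j Hij Hj Hi Htw; have := HD i.+1 j.+1 Hij Hj Hi Htw; lia.
Qed.

Lemma L_mono s i j : stepok s -> i <= j -> j < size s ->
  nth 0 s i + (j - i) <= nth 0 s j.
Proof.
move=> Hs; elim: j => [|j IH] Hij Hj.
  have -> : i = 0 by lia.
  by rewrite subnn addn0.
case: (ltngtP i j.+1) Hij => // [Hlt|<-] _; last by rewrite subnn addn0.
have := IH (ltnSE Hlt) (ltnW Hj); have := Hs j Hj; rewrite /two; lia.
Qed.

Lemma L_ones s i j : stepok s -> i <= j -> j < size s ->
  (forall k, i <= k -> k < j -> ~ two s k) ->
  nth 0 s j = nth 0 s i + (j - i).
Proof.
move=> Hs; elim: j => [|j IH] Hij Hj Hk.
  have -> : i = 0 by lia.
  by rewrite subnn addn0.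
case: (ltngtP i j.+1) Hij => // [Hlt|<-] _; last by rewrite subnn addn0.
have Hl : i <= j by lia.
have := IH Hl (ltnW Hj) (fun k a b => Hk k a (ltnW b)).
have := Hk j Hl (ltnSn j); have := Hs j Hj; rewrite /two; lia.
Qed.

Lemma DP s : stepok s -> Dp s -> Pp s.
Proof.
move=> Hs HD i j Hij Hj Hi Htw.
have := HD i j Hij Hj Hi Htw.
have := L_mono Hs Hij (ltnW Hj). move: Hi; rewrite /two; lia.
Qed.

Lemma PD s : stepok s -> Pp s -> Dp s.
Proof.
move=> Hs HP i j; elim/ltn_ind: j => j IH Hij Hj Hi Htw.
case: (boolP (has (fun k => nth 0 s k.+1 == nth 0 s k + 2) (iota i.+1 (j - i.+1)))).
  move/hasP=> [k]; rewrite mem_iota => /andP [H1 H2] /eqP Hk.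
  have := IH k ltac:(lia) H1 ltac:(lia) Hi Hk; lia.
move/hasPn=> Hn.
have Hones := @L_ones s i.+1 j Hs Hij (ltnW Hj).
have E : nth 0 s j = nth 0 s i.+1 + (j - i.+1).
  apply: Hones => k H1 H2 Hk; have := Hn k; rewrite mem_iota.
  by rewrite H1 /= (_ : k < i.+1 + (j - i.+1)) ?Hk ?eqxx //; lia.
have := HP i j Hij Hj Hi Htw; move: Hi; rewrite /two; lia.
Qed.

Lemma steps12_mem m x s : s \in steps12 m x ->
  [/\ size s = m, (0 < m -> nth 0 s 0 = x) & stepok s].
Proof.
elim: m x s => [|m IH] x s.
  by rewrite inE => /eqP ->; split=> // i.
case: m IH => [|m] IH.
  by rewrite inE => /eqP ->; split=> // i.
rewrite [steps12 _ _]/= => /mapP [t]; rewrite mem_cat => Ht ->.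
have [y [Hy [Hs H0 Hst]]] : exists y, (y = x.+1 \/ y = x.+2) /\
    [/\ size t = m.+1, nth 0 t 0 = y & stepok t].
  case/orP: Ht => /IH [? H ?]; [exists x.+1|exists x.+2].
    by split; [left|split=> //; exact: H].
  by split; [right|split=> //; exact: H].
split=> //=; first by rewrite Hs.
case=> [|i] /= Hi; last by apply: Hst.
rewrite /two /= H0; case: Hy => ->; [left|right]; lia.
Qed.

Lemma alpha_okr n s : 0 < n -> s \in steps12 n 1 -> alpha_ok n s = okr 0 s.
Proof.
case: n => // n _ Hm; have [Hs H0 Hst] := steps12_mem Hm.
apply/idP/idP.
- move=> /and4P [_ _ _ /allP Ha].
  apply/(okr_char 0 Hst); split; first by move=> j.
  apply: PD => // i j Hij Hj Hi Htw.
  have Hi' : i < 0 + n by rewrite Hs in Hj; lia.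
  have Hj' : j < 0 + n by rewrite Hs in Hj; lia.
  have := Ha i; rewrite mem_iota /= => /(_ Hi') /allP /(_ j).
  rewrite mem_iota /= => /(_ Hj') /implyP /(_ Hij) /implyP.
  move: Hi Htw; rewrite /two => Hi Htw.
  rewrite Hi Htw (_ : nth 0 s i + 2 - nth 0 s i = 2) ?eqxx; last by lia.
  rewrite (_ : nth 0 s j + 2 - nth 0 s j = 2) ?eqxx; last by lia.
  by move=> /(_ isT) /implyP /(_ isT).
- move=> /(okr_char 0 Hst) [_ HD]; have HP := DP Hst HD.
  apply/and4P; split; first by rewrite Hs.
  + by rewrite H0.
  + apply/allP => i; rewrite mem_iota /= add0n => Hi.
    have := Hst i ltac:(rewrite Hs; lia); rewrite /two => -[] ->.
    by rewrite (_ : nth 0 s i + 1 = (nth 0 s i).+1) ?eqxx //; lia.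
    by rewrite (_ : nth 0 s i + 2 = (nth 0 s i).+2) ?eqxx ?orbT //; lia.
  + apply/allP => i; rewrite mem_iota /= add0n => Hi.
    apply/allP => j; rewrite mem_iota /= add0n => Hj.
    apply/implyP => Hij; apply/implyP => /eqP Hi2; apply/implyP => /eqP Hj2.
    have [Ei|Ei] := Hst i ltac:(rewrite Hs; lia); first by move: Hi2; rewrite Ei; lia.
    have [Ej|Ej] := Hst j ltac:(rewrite Hs; lia); first by move: Hj2; rewrite Ej; lia.
    exact: (HP i j Hij ltac:(rewrite Hs; lia) Ei Ej).
Qed.

Definition cnt m x c := count (okr c) (steps12 m x).

Lemma steps12_SS m x : steps12 m.+2 x =
  map (cons x) (steps12 m.+1 x.+1 ++ steps12 m.+1 x.+2).
Proof. by []. Qed.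

Lemma cnt_rec m x c : cnt m.+2 x c =
  cnt m.+1 x.+1 c.-1 + (if c == 0 then cnt m.+1 x.+2 4 else 0).
Proof.
rewrite /cnt steps12_SS count_map count_cat; congr addn.
  apply: eq_in_count => s Hm; have [Hs H0 _] := steps12_mem Hm; clear Hm.
  case: s Hs H0 => [|y t] //= _ /(_ isT) ->; by rewrite eqxx.
case: (c =P 0) => [->|Hc].
  apply: eq_in_count => s Hm; have [Hs H0 _] := steps12_mem Hm; clear Hm.
  case: s Hs H0 => [|y t] //= _ /(_ isT) ->.
  by rewrite (_ : (x.+2 == x.+1) = false) ?eqxx //; apply/eqP; lia.
rewrite -(count_pred0 (steps12 m.+1 x.+2)).
apply: eq_in_count => s Hm; have [Hs H0 _] := steps12_mem Hm; clear Hm.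
case: s Hs H0 => [|y t] //= _ /(_ isT) ->.
rewrite (_ : (x.+2 == x.+1) = false); last by apply/eqP; lia.
by move/eqP/negbTE: Hc => ->.
Qed.

Lemma cnt1 x c : cnt 1 x c = 1. Proof. by []. Qed.

Lemma cnt_x m x c : cnt m x c = cnt m 0 c.
Proof.
case: m => [//|m]; elim: m x c => [//|m IH] x c.
by rewrite !cnt_rec !IH.
Qed.

Definition C m c := cnt m 0 c.

Lemma C4 m : C m.+4.+1 4 = C m.+1 0.
Proof. by rewrite /C !cnt_rec /= !addn0 (cnt_x _ 4). Qed.

Lemma C0 m : C m.+4.+2 0 = C m.+4.+1 0 + C m.+1 0.
Proof.
rewrite /C cnt_rec /= (cnt_x _ 1) (cnt_x _ 2).
by move: (C4 m); rewrite /C => <-.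
Qed.

Lemma alpha_C n : 0 < n -> alpha n = C n 0.
Proof.
move=> Hn; rewrite /alpha /C -(cnt_x n 1) /cnt.
by apply: eq_in_count => s Hs; apply: alpha_okr.
Qed.

Fixpoint V (m : nat) : seq (seq nat) :=
  match m with
  | S ((S (S (S (S k)))) as m1) =>
      if k is 0 then [:: [::]] else V m1 ++ map (fun g => rcons g m) (V k)
  | _ => [:: [::]]
  end.

Definition r5 : rel nat := fun a b => a + 5 <= b.
Definition goodg (m : nat) (g : seq nat) :=
  pairwise r5 g && all (fun a => (6 <= a) && (a <= m)) g.

Lemma V_small m : m <= 5 -> V m = [:: [::]].
Proof. by case: m => [|[|[|[|[|[|m]]]]]]. Qed.

Lemma V_S k : V k.+4.+2 = V k.+4.+1 ++ map (fun g => rcons g k.+4.+2) (V k.+1).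
Proof. by []. Qed.

Lemma goodg_nil m g : m <= 5 -> goodg m g = (g == [::]).
Proof.
move=> Hm; case: g => [|a g] //=; apply/negbTE; rewrite /goodg /= negb_and.
apply/orP; right; rewrite negb_and; apply/orP; left.
rewrite negb_and -!ltnNge; apply/orP; lia.
Qed.

Lemma V_mem m g : (g \in V m) = goodg m g.
Proof.
elim/ltn_ind: m g => m IH g.
case: (leqP m 5) => Hm; first by rewrite V_small // inE goodg_nil.
have [k Ek] : exists k, m = k.+4.+2 by exists (m - 6); lia.
subst m; rewrite V_S mem_cat (IH k.+4.+1 (ltnSn _)) /goodg.
apply/orP/idP.
- case=> [/andP [Hp Ha]|/mapP [g' Hg' ->]].
    rewrite Hp /=; apply/allP=> a Ha'; have /andP [-> /=] := allP Ha a Ha'; lia.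
  move: Hg'; rewrite (IH k.+1 ltac:(lia)) /goodg => /andP [Hp Ha].
  rewrite pairwise_rcons Hp andbT -cats1 all_cat /= ltnSn !andbT.
  apply/andP; split; apply/allP => a Ha'; have /andP [H1 H2] := allP Ha a Ha'.
    by rewrite /r5 /=; lia.
  by rewrite H1 /=; lia.
- move=> /andP [Hp Ha].
  case: (boolP (k.+4.+2 \in g)) => Hin; last first.
    left; rewrite Hp /=; apply/allP => a Ha'; have /andP [-> H2] := allP Ha a Ha'.
    by case: (a =P k.+4.+2) Hin => [<-|]; [rewrite Ha'|lia].
  right; case/lastP: g Hp Ha Hin => [//|g z] Hp Ha Hin.
  move: Hp Ha; rewrite pairwise_rcons -cats1 all_cat /= andbT => /andP [Hz Hp] /andP [Ha Hzb].
  have Ez : z = k.+4.+2.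
    move: Hin; rewrite mem_rcons inE => /orP [/eqP //|Hg].
    have := allP Hz _ Hg; rewrite /r5; lia.
  subst z; apply/mapP; exists g => //.
  rewrite (IH k.+1 ltac:(lia)) /goodg Hp /=; apply/allP => a Ha'.
  have /andP [-> _] := allP Ha a Ha'; have := allP Hz a Ha'; rewrite /r5 /=; lia.
by rewrite cats1.
Qed.

Lemma V_uniq m : uniq (V m).
Proof.
elim/ltn_ind: m => m IH.
case: (leqP m 5) => Hm; first by rewrite V_small.
have [k Ek] : exists k, m = k.+4.+2 by exists (m - 6); lia.
subst m; rewrite V_S cat_uniq IH // map_inj_uniq ?IH //; last exact: rcons_injl.
rewrite andbT; apply/hasPn => x /mapP [g _ ->].
rewrite V_mem /goodg negb_and; apply/orP; right.
apply/allPn; exists k.+4.+2; first by rewrite mem_rcons mem_head.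
by rewrite negb_and ltnn orbT.
lia.
Qed.

Lemma C_V m : C m.+1 0 = size (V m.+4.+1).
Proof.
elim/ltn_ind: m => m IH.
case: (leqP m 4) => Hm.
  by case: m IH Hm => [|[|[|[|[|m]]]]] //= IH Hm; vm_compute.
have [p Ep] : exists p, m = p.+4.+1 by exists (m - 5); lia.
subst m; rewrite C0 (IH p.+4 ltac:(lia)) (IH p ltac:(lia)).
by rewrite (V_S p.+4) size_cat size_map.
Qed.

Definition hOf (g : seq nat) := mkseq (fun i => nth 0 g i + i.+1) (size g).

Lemma hOf_inj : injective hOf.
Proof.
move=> g1 g2 E.
have Hs : size g1 = size g2 by move: (congr1 size E); rewrite !size_mkseq.
apply: (eq_from_nth (x0 := 0) Hs) => i Hi.
have := congr1 (fun s => nth 0 s i) E; rewrite /= !nth_mkseq -?Hs //; lia.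
Qed.

Lemma valid_of d g : 9 <= d -> goodg (d - 4) g -> valid_h d (hOf (rcons g d.+1)).
Proof.
move=> Hd /andP [Hp Ha].
set G := rcons g d.+1.
have HpG : pairwise r5 G.
  rewrite pairwise_rcons Hp andbT; apply/allP => a Ha'.
  have /andP [_ H] := allP Ha a Ha'; rewrite /r5 /=; lia.
have HaG : all (fun a => 6 <= a) G.
  rewrite /G -cats1 all_cat /= andbT; apply/andP; split; last by lia.
  by apply/allP => a Ha'; have /andP [-> _] := allP Ha a Ha'.
have HsG : size G = (size g).+1 by rewrite size_rcons.
have Hgap : forall i, i.+1 < size G -> nth 0 G i + 5 <= nth 0 G i.+1.
  move=> i Hi; move/(pairwiseP 0): HpG => HP; apply: (HP i i.+1); rewrite ?inE /=; lia.
rewrite /hOf /valid_h size_mkseq; split.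
- by rewrite HsG.
- move=> i Hi; rewrite !nth_mkseq //; try lia; have := Hgap i Hi; lia.
- rewrite nth_mkseq ?HsG //.
  have HG0 : 0 < size G by rewrite HsG.
  have := allP HaG (nth 0 G 0) (mem_nth 0 HG0); lia.
- rewrite nth_mkseq ?HsG // /G nth_rcons /= ltnn eqxx; lia.
- move=> i Hi; rewrite !nth_mkseq //; try lia; have := Hgap i Hi; lia.
Qed.

Lemma valid_to d h : 9 <= d -> valid_h d h ->
  exists2 g, goodg (d - 4) g & h = hOf (rcons g d.+1).
Proof.
move=> Hd [Hs Hinc H0 Hlast Hgap].
have Hlow : forall i, i < size h -> 7 + 6 * i <= nth 0 h i.
  elim=> [|i IH] Hi; first by lia.
  have := IH (ltnW Hi); have := Hgap i Hi; lia.
set G := mkseq (fun i => nth 0 h i - i.+1) (size h).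
have HsG : size G = size h by rewrite size_mkseq.
have Hmon : forall i j, i < j -> j < size h -> nth 0 G i + 5 <= nth 0 G j.
  move=> i; elim=> [//|j IH] Hij Hj.
  have Hgj := Hgap j Hj; have Hlj := Hlow j (ltnW Hj); have Hlj1 := Hlow j.+1 Hj.
  rewrite /G !nth_mkseq //; try lia.
  case: (ltngtP i j) (ltnSE Hij) => // [Hlt|Eij] _.
    have := IH Hlt (ltnW Hj); rewrite /G !nth_mkseq //; lia.
  subst i; lia.
have HpG : pairwise r5 G.
  apply/(pairwiseP 0) => i j; rewrite !inE /= HsG => Hi Hj Hij.
  exact: Hmon.
have HaG : all (fun a => 6 <= a) G.
  apply/allP => a /(nthP 0) [i Hi <-]; rewrite HsG in Hi.
  have E0 : nth 0 G 0 = nth 0 h 0 - 1 by rewrite /G nth_mkseq //; lia.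
  case: i Hi => [|i] Hi; first by rewrite E0; lia.
  have := Hmon 0 i.+1 isT Hi; rewrite E0.
  move: (nth 0 G i.+1) => y; lia.
have HGh : h = hOf G.
  apply: (eq_from_nth (x0 := 0)); first by rewrite /hOf size_mkseq HsG.
  move=> i Hi; rewrite /hOf nth_mkseq ?HsG // /G nth_mkseq //.
  have := Hlow i Hi; lia.
case/lastP E: G HpG HaG HGh HsG => [|g z]; first by move=> _ _ _ /= ; lia.
move=> HpG HaG HGh HsG.
have Ez : z = d.+1.
  have := congr1 (fun s => nth 0 s (size h).-1) E.
  rewrite /G nth_mkseq; last by lia.
  rewrite nth_rcons -HsG size_rcons /= ltnn eqxx.
  move: Hlast; rewrite -HsG size_rcons /=; lia.
subst z; exists g => //.
move: HpG HaG; rewrite pairwise_rcons -cats1 all_cat /= andbT.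
move=> /andP [Hz Hp] /andP [Ha _]; rewrite /goodg Hp /=.
apply/allP => a Ha'; rewrite (allP Ha a Ha') /=.
have := allP Hz a Ha'; rewrite /r5 /=; lia.
Qed.

Theorem proposition7p1 (d : nat) : 46 <= d ->
  num_of (fun h : seq nat => valid_h d h) (alpha (d - 8)).
Proof.
move=> Hd.
exists (map (fun g => hOf (rcons g d.+1)) (V (d - 4))); split.
- rewrite map_inj_uniq ?V_uniq // => g1 g2 /hOf_inj; exact: rcons_injl.
- move=> h; split.
    move=> /mapP [g Hg ->]; apply: valid_of; first by lia.
    by rewrite -V_mem.
  have Hd9 : 9 <= d by lia.
  move=> /(valid_to Hd9) [g Hg ->]; apply/mapP; exists g => //.
  by rewrite V_mem.
- rewrite size_map alpha_C; last by lia.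
  have -> : d - 8 = (d - 9).+1 by lia.
  by rewrite C_V (_ : (d - 9).+4.+1 = d - 4) //; lia.
Qed.
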